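(* Let $\alpha\ge0$, $\mu\ge0$. For every $h\in C_B^2[0,\infty)$, every $n\in\mathbb{N}$ and every $x\in[0,\infty)$, $$|T_n(h;x)-h(x)|\le(\Delta_1+\Delta_2)\|h\|_{C_B^2[0,\infty)},$$ where $\Delta_1=\dfrac{2\alpha x^2}{n}$ and $\Delta_2=\dfrac{1}{n^2}x\left(4x^3\alpha^2+4\alpha x+n\right)+\dfrac{2\mu x}{n}\dfrac{e_\mu(-nx)}{e_\mu(nx)}$.
   Context: $C_B[0,\infty)$ denotes the space of uniformly continuous bounded functions on $[0,\infty)$ with the sup norm $\|\cdot\|_{C_B[0,\infty)}$; $C_B^2[0,\infty)=\{g\in C_B[0,\infty): g',g''\in C_B[0,\infty)\}$ with norm $\|g\|_{C_B^2[0,\infty)}=\|g\|_{C_B}+\|g'\|_{C_B}+\|g''\|_{C_B}$. For $\mu>-\tfrac12$ define $\gamma_\mu(2k)=\dfrac{2^{2k}k!\,\Gamma(k+\mu+1/2)}{\Gamma(\mu+1/2)}$ and $\gamma_\mu(2k+1)=\dfrac{2^{2k+1}k!\,\Gamma(k+\mu+3/2)}{\Gamma(\mu+1/2)}$, $k\ge0$; $e_\mu(x)=\sum_{k\ge0} x^k/\gamma_\mu(k)$; $\theta_k=0$ if $k$ is even and $\theta_k=1$ if $k$ is odd. Let $h_k^\mu(\xi,\alpha)=\gamma_\mu(k)\sum_{j=0}^{\lfloor k/2\rfloor}\dfrac{\alpha^j\xi^{k-2j}}{j!\,\gamma_\mu(k-2j)}$. For $\alpha\ge0,\mu\ge0$,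 $n\in\mathbb{N}$ and $x\in[0,\infty)$ define $$T_n(f;x)=\frac{1}{e^{\alpha x^2}e_\mu(nx)}\sum_{k=0}^\infty \frac{h_k^\mu(n,\alpha)}{\gamma_\mu(k)}x^k f\!\left(\frac{k+2\mu\theta_k}{n}\right).$$ *)

(* Defs.v *)
From Stdlib Require Import Reals Lra Arith Factorial.
From Coquelicot Require Import Coquelicot.
Open Scope R_scope.

(* Pochhammer symbol: poch a k = a (a+1) ... (a+k-1) = Gamma(a+k)/Gamma(a) for a > 0. *)
Fixpoint poch (a : R) (k : nat) : R :=
  match k with
  | O => 1
  | S k' => poch a k' * (a + INR k')
  end.

(* gamma_mu(2m)   = 2^(2m)   m! Gamma(m+mu+1/2)/Gamma(mu+1/2)
   gamma_mu(2m+1) = 2^(2m+1) m! Gamma(m+mu+3/2)/Gamma(mu+1/2) *)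
Definition gamma_mu (mu : R) (k : nat) : R :=
  if Nat.even k
  then 2 ^ k * INR (fact (Nat.div2 k)) * poch (mu + / 2) (Nat.div2 k)
  else 2 ^ k * INR (fact (Nat.div2 k)) * poch (mu + / 2) (S (Nat.div2 k)).

Definition e_mu (mu x : R) : R := Series (fun k => x ^ k / gamma_mu mu k).

Definition theta (k : nat) : R := if Nat.odd k then 1 else 0.

Definition h_poly (mu : R) (k : nat) (xi a : R) : R :=
  gamma_mu mu k *
  sum_f_R0 (fun j => a ^ j * xi ^ (k - 2 * j) / (INR (fact j) * gamma_mu mu (k - 2 * j)))
           (Nat.div2 k).

Definition T_op (alpha mu : R) (n : nat) (f : R -> R) (x : R) : R :=
  / (exp (alpha * x ^ 2) * e_mu mu (INR n * x)) *
  Series (fun k => h_poly mu k (INR n) alpha / gamma_mu mu k * x ^ k *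
                   f ((INR k + 2 * mu * theta k) / INR n)).

Definition is_CB (f : R -> R) : Prop :=
  (exists M, forall x, 0 <= x -> Rabs (f x) <= M) /\
  (forall eps, 0 < eps -> exists delta, 0 < delta /\
     forall x y, 0 <= x -> 0 <= y -> Rabs (x - y) < delta -> Rabs (f x - f y) < eps).

Definition is_deriv_halfline (f g : R -> R) : Prop :=
  forall x, 0 <= x ->
    filterlim (fun y => (f y - f x) / (y - x))
              (within (fun y => 0 <= y /\ y <> x) (locally x)) (locally (g x)).

Definition is_CB2 (h h1 h2 : R -> R) : Prop :=
  is_CB h /\ is_CB h1 /\ is_CB h2 /\
  is_deriv_halfline h h1 /\ is_deriv_halfline h1 h2.

Definition sup_norm (f : R -> R) : R :=
  real (Lub_Rbar (fun r => exists x, 0 <= x /\ r = Rabs (f x))).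

Definition CB2_norm (h h1 h2 : R -> R) : R :=
  sup_norm h + sup_norm h1 + sup_norm h2.

(* Main.v *)
Require Import Defs.
From Stdlib Require Import Reals Lra Lia Arith Factorial.
From Coquelicot Require Import Coquelicot.
Open Scope R_scope.

Lemma poch_pos a k : 0 < a -> 0 < poch a k.
Proof. intros Ha; induction k; simpl. lra. apply Rmult_lt_0_compat; auto. pose proof (pos_INR k); lra. Qed.

Lemma theta_even m : theta (2*m) = 0.
Proof. unfold theta. rewrite Nat.odd_mul. reflexivity. Qed.
Lemma theta_odd m : theta (S (2*m)) = 1.
Proof. unfold theta. rewrite Nat.odd_succ, Nat.even_mul. reflexivity. Qed.

Lemma gamma_even mu m : gamma_mu mu (2*m) = 2 ^ (2*m) * INR (fact m) * poch (mu + /2) m.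
Proof. unfold gamma_mu. rewrite Nat.even_mul, Nat.div2_double. reflexivity. Qed.
Lemma gamma_odd mu m : gamma_mu mu (S (2*m)) = 2 ^ (S (2*m)) * INR (fact m) * poch (mu + /2) (S m).
Proof. unfold gamma_mu. rewrite Nat.even_succ, Nat.odd_mul, Nat.div2_succ_double. reflexivity. Qed.

Definition sm mu k := INR k + 2 * mu * theta k.

Lemma gamma_S mu k : gamma_mu mu (S k) = sm mu (S k) * gamma_mu mu k.
Proof.
  unfold sm. destruct (Nat.Even_or_Odd k) as [[m ->]|[m ->]].
  - rewrite gamma_odd, gamma_even, theta_odd. simpl poch.
    rewrite S_INR, mult_INR. simpl (INR 2). rewrite <- tech_pow_Rmult. field.
  - replace (S (2*m+1)) with (2*(S m))%nat by lia.
    replace (2*m+1)%nat with (S (2*m)) by lia.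
    rewrite gamma_even, gamma_odd, theta_even.
    replace (2 * S m)%nat with (S (S (2*m))) by lia.
    rewrite fact_simpl, mult_INR. simpl poch.
    rewrite !S_INR, mult_INR. simpl (INR 2). rewrite <- !tech_pow_Rmult. ring.
Qed.

Lemma gamma_0 mu : gamma_mu mu 0 = 1.
Proof. unfold gamma_mu. simpl. ring. Qed.

Lemma theta_01 k : theta k = 0 \/ theta k = 1.
Proof. unfold theta. destruct (Nat.odd k); auto. Qed.

Lemma sm_ge mu k : 0 <= mu -> INR k <= sm mu k.
Proof. intros. unfold sm. destruct (theta_01 k) as [->| ->]; lra. Qed.

Lemma gamma_ge_fact mu k : 0 <= mu -> INR (fact k) <= gamma_mu mu k.
Proof.
  intros Hmu. induction k.
  - rewrite gamma_0. simpl. lra.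
  - rewrite gamma_S, fact_simpl, mult_INR.
    apply Rmult_le_compat; auto using pos_INR, sm_ge.
Qed.

Lemma gamma_pos mu k : 0 <= mu -> 0 < gamma_mu mu k.
Proof. intros. eapply Rlt_le_trans; [|apply gamma_ge_fact; auto]. apply lt_0_INR, lt_O_fact. Qed.

Lemma theta_S k : theta (S k) = 1 - theta k.
Proof. unfold theta. rewrite Nat.odd_succ, <- Nat.negb_odd. destruct (Nat.odd k); simpl; lra. Qed.

Lemma theta_sub k j : (2*j <= k)%nat -> theta (k - 2*j) = theta k.
Proof. intros H. unfold theta. replace k with ((k - 2*j) + 2*j)%nat at 2 by lia.
  rewrite Nat.odd_add, Nat.odd_mul. simpl. rewrite Bool.xorb_false_r. reflexivity. Qed.

Lemma exp_series z : is_series (fun j => z ^ j / INR (fact j)) (exp z).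
Proof.
  generalize (is_exp_Reals z). unfold is_pseries. apply is_series_ext.
  intros k. rewrite pow_n_pow. reflexivity.
Qed.

Lemma shift_series f l c : is_series f l ->
  is_series (fun k => match k with O => 0 | S k' => c * f k' end) (c*l).
Proof.
  intros H. apply is_series_decr_1. simpl.
  match goal with |- is_series _ ?L => replace L with (scal c l) end.
  - apply (is_series_scal c f l H).
  - change (c * l = c * l + - 0). ring.
Qed.

Lemma lin3_series a b c la lb lc A B C :
  is_series a la -> is_series b lb -> is_series c lc ->
  is_series (fun k => A * a k + B * b k + C * c k) (A*la + B*lb + C*lc).
Proof.
  intros Ha Hb Hc.
  apply (is_series_plus (fun k => A * a k + B * b k) (fun k => C * c k) (A*la+B*lb) (C*lc)).
  - apply (is_series_plus (fun k => A * a k) (fun k => B * b k)).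
    + apply (is_series_scal A a la Ha).
    + apply (is_series_scal B b lb Hb).
  - apply (is_series_scal C c lc Hc).
Qed.

Lemma Q_abs_ex mu y : 0 <= mu -> ex_series (fun m => Rabs (y ^ m / gamma_mu mu m)).
Proof.
  intros Hmu. apply (@ex_series_le R_AbsRing R_CompleteNormedModule _ (fun m => Rabs y ^ m / INR (fact m))).
  - intros m. change (norm (Rabs (y ^ m / gamma_mu mu m))) with (Rabs (Rabs (y ^ m / gamma_mu mu m))).
    rewrite Rabs_Rabsolu. unfold Rdiv. rewrite Rabs_mult, <- RPow_abs.
    apply Rmult_le_compat_l. apply pow_le, Rabs_pos.
    pose proof (gamma_pos mu m Hmu). rewrite Rabs_inv, Rabs_pos_eq by lra.
    apply Rinv_le_contravar. apply lt_0_INR, lt_O_fact. apply gamma_ge_fact; auto.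
  - eexists. apply exp_series.
Qed.

Lemma Q_series mu y : 0 <= mu -> is_series (fun m => y ^ m / gamma_mu mu m) (e_mu mu y).
Proof. intros. apply Series_correct. apply ex_series_Rabs, Q_abs_ex; auto. Qed.

Definition ev (e : nat -> R) (i : nat) : R := if Nat.even i then e (Nat.div2 i) else 0.

Lemma sum_ev e g N : sum_f_R0 (fun i => ev e i * g i) N = sum_f_R0 (fun j => e j * g (2*j)%nat) (Nat.div2 N).
Proof.
  induction N.
  - simpl. unfold ev. simpl. reflexivity.
  - simpl sum_f_R0 at 1. rewrite IHN. unfold ev at 1.
    destruct (Nat.Even_or_Odd N) as [[m ->]|[m ->]].
    + rewrite Nat.even_succ, Nat.odd_mul, Nat.div2_succ_double, Nat.div2_double. simpl. ring.
    + replace (S (2*m+1)) with (2 * S m)%nat by lia.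
      replace (2*m+1)%nat with (S (2*m)) by lia.
      rewrite Nat.even_mul, Nat.div2_succ_double, Nat.div2_double. simpl (Nat.even 2). cbv iota.
      simpl sum_f_R0 at 2. reflexivity.
Qed.

Lemma div2_eventually : filterlim Nat.div2 eventually eventually.
Proof.
  intros P [N HN]. exists (2*N)%nat. intros n Hn. apply HN.
  pose proof (Nat.div2_odd n). destruct (Nat.odd n); simpl in H; lia.
Qed.

Lemma ev_series e l : is_series e l -> is_series (ev e) l.
Proof.
  intros H. unfold is_series in *.
  apply (filterlim_ext (fun N => sum_n e (Nat.div2 N))).
  - intros N. rewrite !sum_n_Reals. generalize (sum_ev e (fun _ => 1) N).
    intros E. transitivity (sum_f_R0 (fun j => e j * 1) (Nat.div2 N)).
    + apply sum_eq. intros; symmetry; apply Rmult_1_r.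
    + rewrite <- E. apply sum_eq. intros; apply Rmult_1_r.
  - eapply filterlim_comp. apply div2_eventually. exact H.
Qed.

Lemma cauchy_ev e b le lb : (forall j, 0 <= e j) -> (forall m, 0 <= b m) ->
  is_series e le -> is_series b lb ->
  is_series (fun k => sum_f_R0 (fun j => e j * b (k - 2*j)%nat) (Nat.div2 k)) (le*lb).
Proof.
  intros He Hb Hse Hsb.
  generalize (is_series_mult_pos (ev e) b le lb (ev_series e le Hse) Hsb).
  intros H. eapply is_series_ext; [|apply H].
  - intros k. simpl. apply (sum_ev e (fun i => b (k - i)%nat) k).
  - intros i. unfold ev. destruct (Nat.even i); auto. lra.
  - auto.
Qed.

Lemma is_series_eq (a : nat -> R) l l' : is_series a l -> l = l' -> is_series a l'.
Proof. intros H ->. exact H. Qed.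

Ltac fixeq := match goal with |- ?a = ?b => change (@eq R a b) end.

Definition Q mu y m := y ^ m / gamma_mu mu m.
Definition Ez z j := z ^ j / INR (fact j).

Lemma sm_pos mu k : 0 <= mu -> 0 < sm mu (S k).
Proof. intros. eapply Rlt_le_trans; [|apply sm_ge; auto]. apply lt_0_INR; lia. Qed.

Lemma sm_0 mu : sm mu 0 = 0.
Proof. unfold sm, theta. simpl. ring. Qed.

Lemma sm_S mu k : sm mu (S k) = sm mu k + 1 + 2*mu - 4*mu*theta k.
Proof. unfold sm. rewrite theta_S, S_INR. ring. Qed.

Lemma pow_neg y m : (-y)^m = (1 - 2 * theta m) * y ^ m.
Proof. induction m. unfold theta; simpl; ring. simpl. rewrite IHm, theta_S. ring. Qed.

Section S.
Variable mu : R.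
Hypothesis Hmu : 0 <= mu.

Lemma Q0s y : is_series (Q mu y) (e_mu mu y).
Proof. apply Q_series; auto. Qed.

Lemma Q1s y : is_series (fun m => sm mu m * Q mu y m) (y * e_mu mu y).
Proof.
  eapply is_series_ext; [|apply (shift_series _ _ y (Q0s y))].
  intros [|k]; fixeq. rewrite sm_0; ring.
  unfold Q. rewrite gamma_S. pose proof (sm_pos mu k Hmu). pose proof (gamma_pos mu k Hmu).
  simpl. field. lra.
Qed.

Lemma Qts y : is_series (fun m => theta m * Q mu y m) ((e_mu mu y - e_mu mu (-y))/2).
Proof.
  eapply is_series_eq.
  - eapply is_series_ext; [|apply (lin3_series _ _ _ _ _ _ (/2) (-/2) 0 (Q0s y) (Q0s (-y)) (Q0s y))].
    intros m; fixeq. unfold Q. rewrite pow_neg. pose proof (gamma_pos mu m Hmu).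
    destruct (theta_01 m) as [E|E]; rewrite E; field; lra.
  - fixeq; field.
Qed.

Lemma Q2s y : is_series (fun m => sm mu m ^ 2 * Q mu y m)
   (y * (y * e_mu mu y + e_mu mu y + 2 * mu * e_mu mu (-y))).
Proof.
  eapply is_series_eq.
  - eapply is_series_ext; [|apply (shift_series _ _ y (lin3_series _ _ _ _ _ _ 1 (1+2*mu) (-4*mu) (Q1s y) (Q0s y) (Qts y)))].
    intros [|k]; fixeq. rewrite sm_0; ring.
    pose proof (sm_pos mu k Hmu). pose proof (gamma_pos mu k Hmu).
    assert (E : sm mu (S k) ^ 2 * Q mu y (S k) = sm mu (S k) * (y * Q mu y k))
      by (unfold Q; rewrite gamma_S; simpl; field; lra).
    rewrite E, sm_S. ring.
  - fixeq; field.
Qed.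
End S.

Lemma E0s z : is_series (Ez z) (exp z).
Proof. apply exp_series. Qed.

Lemma E1s z : is_series (fun j => INR j * Ez z j) (z * exp z).
Proof.
  eapply is_series_ext; [|apply (shift_series _ _ z (E0s z))].
  intros [|k]; fixeq. simpl; ring.
  unfold Ez. rewrite fact_simpl, mult_INR. pose proof (INR_fact_neq_0 k).
  pose proof (pos_INR k). rewrite S_INR. simpl. field. lra.
Qed.

Lemma E2s z : is_series (fun j => INR j ^ 2 * Ez z j) (z * (z * exp z + exp z)).
Proof.
  eapply is_series_eq.
  - eapply is_series_ext; [|apply (shift_series _ _ z (lin3_series _ _ _ _ _ _ 1 1 0 (E1s z) (E0s z) (E0s z)))].
    intros [|k]; fixeq. simpl; ring.
    unfold Ez. rewrite fact_simpl, mult_INR. pose proof (INR_fact_neq_0 k).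
    pose proof (pos_INR k). rewrite S_INR. simpl. field. lra.
  - fixeq; ring.
Qed.

Lemma sum_lin3 f g h A B C N :
  A * sum_f_R0 f N + B * sum_f_R0 g N + C * sum_f_R0 h N =
  sum_f_R0 (fun i => A * f i + B * g i + C * h i) N.
Proof. induction N; simpl. ring. rewrite <- IHN. ring. Qed.

Lemma sum_mulr f c N : sum_f_R0 f N * c = sum_f_R0 (fun i => f i * c) N.
Proof. induction N; simpl. ring. rewrite <- IHN. ring. Qed.

Lemma div2_le k j : (j <= Nat.div2 k)%nat -> (2*j <= k)%nat.
Proof. intros H. pose proof (Nat.div2_odd k). destruct (Nat.odd k); simpl in H0; lia. Qed.

Lemma sm_split mu k j : (2*j <= k)%nat -> sm mu k = 2 * INR j + sm mu (k - 2*j).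
Proof. intros H. unfold sm. rewrite theta_sub by auto. rewrite minus_INR, mult_INR by auto. simpl. ring. Qed.

Definition acoef alpha mu n x k := h_poly mu k (INR n) alpha / gamma_mu mu k * x ^ k.

Section D.
Variables (alpha mu : R) (n : nat) (x : R).
Hypotheses (Halpha : 0 <= alpha) (Hmu : 0 <= mu) (Hn : (0 < n)%nat) (Hx : 0 <= x).

Let z := alpha * x ^ 2.
Let y := INR n * x.

Lemma a_eq k : acoef alpha mu n x k =
  sum_f_R0 (fun j => Ez z j * Q mu y (k - 2*j)) (Nat.div2 k).
Proof.
  unfold acoef, h_poly. pose proof (gamma_pos mu k Hmu).
  replace (gamma_mu mu k * sum_f_R0 (fun j => alpha ^ j * INR n ^ (k - 2 * j) /
      (INR (fact j) * gamma_mu mu (k - 2 * j))) (Nat.div2 k) / gamma_mu mu k)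
    with (sum_f_R0 (fun j => alpha ^ j * INR n ^ (k - 2 * j) /
      (INR (fact j) * gamma_mu mu (k - 2 * j))) (Nat.div2 k)) by (field; lra).
  rewrite sum_mulr. apply sum_eq. intros j Hj. apply div2_le in Hj.
  unfold Ez, Q, z, y. pose proof (gamma_pos mu (k - 2*j) Hmu). pose proof (INR_fact_neq_0 j).
  replace (x ^ k) with ((x^2)^j * x ^ (k - 2*j)).
  - rewrite !Rpow_mult_distr. field. lra.
  - rewrite <- pow_mult, <- pow_add. f_equal. lia.
Qed.

Lemma z_nn : 0 <= z. Proof. unfold z. apply Rmult_le_pos; auto. apply pow_le; auto. Qed.
Lemma y_nn : 0 <= y. Proof. unfold y. apply Rmult_le_pos; auto. apply pos_INR. Qed.

Lemma Ez_nn j : 0 <= Ez z j.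
Proof. unfold Ez. apply Rmult_le_pos. apply pow_le, z_nn. left. apply Rinv_0_lt_compat, lt_0_INR, lt_O_fact. Qed.
Lemma Q_nn m : 0 <= Q mu y m.
Proof. unfold Q. apply Rmult_le_pos. apply pow_le, y_nn. left. apply Rinv_0_lt_compat, gamma_pos; auto. Qed.
Lemma sm_nn m : 0 <= sm mu m.
Proof. eapply Rle_trans; [apply pos_INR|apply sm_ge; auto]. Qed.

Lemma M0 : is_series (acoef alpha mu n x) (exp z * e_mu mu y).
Proof.
  eapply is_series_ext; [|apply (cauchy_ev _ _ _ _ Ez_nn Q_nn (E0s z) (Q0s mu Hmu y))].
  intros k; fixeq. rewrite a_eq. reflexivity.
Qed.

Lemma M1 : is_series (fun k => acoef alpha mu n x k * sm mu k)
  (2 * (z * exp z * e_mu mu y) + 1 * (exp z * (y * e_mu mu y)) + 0 * (z * exp z * e_mu mu y)).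
Proof.
  assert (H1 := cauchy_ev _ _ _ _ (fun j => Rmult_le_pos _ _ (pos_INR j) (Ez_nn j)) Q_nn (E1s z) (Q0s mu Hmu y)).
  assert (H2 := cauchy_ev _ _ _ _ Ez_nn (fun m => Rmult_le_pos _ _ (sm_nn m) (Q_nn m)) (E0s z) (Q1s mu Hmu y)).
  eapply is_series_ext; [|apply (lin3_series _ _ _ _ _ _ 2 1 0 H1 H2 H1)].
  intros k; fixeq. rewrite a_eq, sum_lin3, sum_mulr. apply sum_eq. intros j Hj.
  apply div2_le in Hj. rewrite (sm_split mu k j Hj). ring.
Qed.

Lemma M2 : is_series (fun k => acoef alpha mu n x k * sm mu k ^ 2)
  (4 * (z * (z * exp z + exp z) * e_mu mu y) + 4 * (z * exp z * (y * e_mu mu y))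
   + 1 * (exp z * (y * (y * e_mu mu y + e_mu mu y + 2 * mu * e_mu mu (-y))))).
Proof.
  assert (H1 := cauchy_ev _ _ _ _ (fun j => Rmult_le_pos _ _ (pow_le _ 2 (pos_INR j)) (Ez_nn j)) Q_nn (E2s z) (Q0s mu Hmu y)).
  assert (H2 := cauchy_ev _ _ _ _ (fun j => Rmult_le_pos _ _ (pos_INR j) (Ez_nn j)) (fun m => Rmult_le_pos _ _ (sm_nn m) (Q_nn m)) (E1s z) (Q1s mu Hmu y)).
  assert (H3 := cauchy_ev _ _ _ _ Ez_nn (fun m => Rmult_le_pos _ _ (pow_le _ 2 (sm_nn m)) (Q_nn m)) (E0s z) (Q2s mu Hmu y)).
  eapply is_series_ext; [|apply (lin3_series _ _ _ _ _ _ 4 4 1 H1 H2 H3)].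
  intros k; fixeq. rewrite a_eq, sum_lin3, sum_mulr. apply sum_eq. intros j Hj.
  apply div2_le in Hj. rewrite (sm_split mu k j Hj). ring.
Qed.
End D.

Lemma sup_norm_spec f : is_CB f ->
  (forall t, 0 <= t -> Rabs (f t) <= sup_norm f) /\ 0 <= sup_norm f.
Proof.
  intros [[M HM] _]. unfold sup_norm.
  set (E := fun r => exists x, 0 <= x /\ r = Rabs (f x)).
  destruct (Lub_Rbar_correct E) as [Hub Hlub].
  assert (HE0 : E (Rabs (f 0))) by (exists 0; split; [lra|reflexivity]).
  assert (HM' : Rbar_le (Lub_Rbar E) M).
  { apply Hlub. intros r [t [Ht ->]]. simpl. apply HM; auto. }
  assert (H0 := Hub _ HE0).
  destruct (Lub_Rbar E) as [r| |]; simpl in *; try contradiction.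
  split.
  - intros t Ht. apply (Hub (Rabs (f t))). exists t; auto.
  - eapply Rle_trans; [apply Rabs_pos|exact H0].
Qed.

Lemma ball_R c e y : ball c e y <-> Rabs (y - c) < e.
Proof. unfold ball. simpl. unfold AbsRing_ball. simpl. unfold abs, minus, plus, opp; simpl. tauto. Qed.

Lemma deriv_int f f' c : is_deriv_halfline f f' -> 0 < c ->
  is_derive (fun t => f (Rmax t 0)) c (f' c).
Proof.
  intros Hd Hc. apply is_derive_Reals. intros eps Heps.
  specialize (Hd c (Rlt_le _ _ Hc) _ (locally_ball (f' c) (mkposreal eps Heps))).
  destruct Hd as [del Hdel].
  assert (Hm : 0 < Rmin del c) by (apply Rmin_pos; [apply cond_pos|lra]).
  exists (mkposreal _ Hm). intros hh Hh0 Hh. simpl in Hh.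
  assert (H1 : Rabs hh < del) by (eapply Rlt_le_trans; [exact Hh|apply Rmin_l]).
  assert (H2 : Rabs hh < c) by (eapply Rlt_le_trans; [exact Hh|apply Rmin_r]).
  assert (Hp : 0 < c + hh) by (apply Rabs_def2 in H2; lra).
  specialize (Hdel (c + hh)). rewrite ball_R in Hdel.
  rewrite (Rmax_left (c+hh) 0) by lra. rewrite (Rmax_left c 0) by lra.
  replace (c + hh - c) with hh in Hdel by ring.
  assert (Hq := Hdel H1). simpl in Hq.
  assert (Hq2 : ball (f' c) eps ((f (c + hh) - f c) / hh)).
  { apply Hq. split. lra. intros E. apply Hh0. lra. }
  rewrite ball_R in Hq2. exact Hq2.
Qed.

Lemma Rmax_lip a b : Rabs (Rmax a 0 - Rmax b 0) <= Rabs (a - b).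
Proof. unfold Rmax. destruct (Rle_dec a 0), (Rle_dec b 0); unfold Rabs;
  repeat destruct Rcase_abs; lra. Qed.

Lemma cont_CB f c : is_CB f -> continuity_pt (fun t => f (Rmax t 0)) c.
Proof.
  intros [_ Huc] eps Heps. destruct (Huc eps Heps) as [d [Hd Hfd]].
  exists d. split. lra. intros t [_ Ht]. simpl in *. unfold R_dist in *.
  apply Hfd. apply Rmax_r. apply Rmax_r. eapply Rle_lt_trans; [apply Rmax_lip|exact Ht].
Qed.

Lemma mvt_half f f' a b : is_CB f -> is_deriv_halfline f f' -> 0 <= a -> 0 <= b ->
  exists c, Rmin a b <= c <= Rmax a b /\ f b - f a = f' c * (b - a).
Proof.
  intros Hcb Hd Ha Hb.
  destruct (MVT_gen (fun t => f (Rmax t 0)) a b f') as [c [Hc E]].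
  - intros t Ht. apply deriv_int; auto. assert (Rmin a b >= 0) by (apply Rle_ge, Rmin_glb; auto). lra.
  - intros t _. apply cont_CB; auto.
  - exists c. split; auto. rewrite (Rmax_left a 0), (Rmax_left b 0) in E by lra. exact E.
Qed.

Lemma taylor_K h h1 h2 x t K : is_CB2 h h1 h2 -> 0 <= x -> 0 <= t ->
  exists c, Rmin t x <= c <= Rmax t x /\
   h t - h x - h1 x * (t - x) - K * (t - x)^2 = (h1 c - h1 x) * (t - x) - 2 * K * ((c - x) * (t - x)).
Proof.
  intros [Hh [Hh1 [Hh2 [Hd Hd1]]]] Hx Ht.
  destruct (MVT_gen (fun s => h (Rmax s 0) - (h x + h1 x * (s - x) + K * (s - x)^2)) x t
     (fun c => h1 c - (h1 x + 2 * K * (c - x)))) as [c [Hc E]].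
  - intros s Hs.
    assert (Hs0 : 0 < s) by (assert (Rmin x t >= 0) by (apply Rle_ge, Rmin_glb; auto); lra).
    assert (D1 := deriv_int h h1 s Hd Hs0).
    assert (D2 : is_derive (fun s => h x + h1 x * (s - x) + K * (s - x)^2) s (h1 x + 2 * K * (s - x))).
    { auto_derive; auto. ring. }
    exact (is_derive_minus _ _ _ _ _ D1 D2).
  - intros s _. apply (continuity_pt_minus (fun s => h (Rmax s 0)) (fun s => h x + h1 x * (s - x) + K * (s - x)^2)). apply cont_CB; auto.
    apply derivable_continuous_pt. reg.
  - exists c. split. rewrite Rmin_comm, Rmax_comm. exact Hc.
    rewrite (Rmax_left x 0), (Rmax_left t 0) in E by lra.
    replace (h t - h x - h1 x * (t - x) - K * (t - x)^2) with
      (h t - (h x + h1 x * (t - x) + K * (t - x) ^ 2) - (h x - (h x + h1 x * (x - x) + K * (x - x) ^ 2))) by ring.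
    rewrite E. ring.
Qed.

Lemma taylor h h1 h2 H2 x t : is_CB2 h h1 h2 -> (forall s, 0 <= s -> Rabs (h2 s) <= H2) ->
  0 <= x -> 0 <= t -> Rabs (h t - h x - h1 x * (t - x)) <= H2 / 2 * (t - x)^2.
Proof.
  intros HH HB Hx Ht.
  assert (Lip : forall s, 0 <= s -> Rabs (h1 s - h1 x) <= H2 * Rabs (s - x)).
  { intros s Hs. destruct HH as [_ [Hh1 [_ [_ Hd1]]]].
    destruct (mvt_half h1 h2 x s Hh1 Hd1 Hx Hs) as [c [Hc E]]. rewrite E, Rabs_mult.
    apply Rmult_le_compat_r. apply Rabs_pos. apply HB.
    eapply Rle_trans; [|apply Hc]. apply Rmin_glb; auto. }
  assert (Key : forall c, Rmin t x <= c <= Rmax t x ->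
     0 <= (c - x) * (t - x) /\ Rabs ((h1 c - h1 x) * (t - x)) <= H2 * ((c - x) * (t - x))).
  { intros c Hc.
    assert (Hc0 : 0 <= c) by (eapply Rle_trans; [|apply Hc]; apply Rmin_glb; auto).
    assert (P : 0 <= (c - x) * (t - x)).
    { unfold Rmin, Rmax in Hc. destruct (Rle_dec t x); nra. }
    split; auto. rewrite Rabs_mult.
    rewrite <- (Rabs_pos_eq _ P), Rabs_mult, <- Rmult_assoc.
    apply Rmult_le_compat_r. apply Rabs_pos. apply Lip; auto. }
  destruct (taylor_K h h1 h2 x t (H2/2) HH Hx Ht) as [c1 [Hc1 E1]].
  destruct (taylor_K h h1 h2 x t (-(H2/2)) HH Hx Ht) as [c2 [Hc2 E2]].
  destruct (Key c1 Hc1) as [P1 B1]. destruct (Key c2 Hc2) as [P2 B2].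
  pose proof (Rle_abs ((h1 c1 - h1 x) * (t - x))).
  pose proof (Rle_abs (- ((h1 c2 - h1 x) * (t - x)))). rewrite Rabs_Ropp in H0.
  apply Rabs_le. split; lra.
Qed.

Lemma series_nn b l : is_series b l -> (forall k, 0 <= b k) -> 0 <= l.
Proof.
  intros H Hb.
  apply (is_lim_seq_le (fun _ => 0) (sum_n b) 0 l).
  - intros k. rewrite sum_n_Reals. apply cond_pos_sum. auto.
  - apply is_lim_seq_const.
  - exact H.
Qed.

Lemma e_mu_pos mu y : 0 <= mu -> 0 <= y -> 1 <= e_mu mu y.
Proof.
  intros Hmu Hy. assert (H := Q0s mu Hmu y).
  assert (H' : is_series (fun k => Q mu y (S k)) (e_mu mu y - 1)).
  { apply is_series_incr_1. unfold Q at 2. simpl. rewrite gamma_0.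
    match goal with |- is_series _ ?L => replace L with (e_mu mu y) end. exact H.
    change (e_mu mu y = Rplus (e_mu mu y - 1) (1/1)). field. }
  apply series_nn in H'. lra.
  intros k. unfold Q. apply Rmult_le_pos. apply pow_le; auto. left. apply Rinv_0_lt_compat, gamma_pos; auto.
Qed.

Theorem lemma8 (alpha mu : R) (Halpha : 0 <= alpha) (Hmu : 0 <= mu)
  (h h1 h2 : R -> R) (Hh : is_CB2 h h1 h2) (n : nat) (Hn : (0 < n)%nat)
  (x : R) (Hx : 0 <= x) :
  Rabs (T_op alpha mu n h x - h x) <=
    (2 * alpha * x ^ 2 / INR n
     + (/ INR n ^ 2 * x * (4 * x ^ 3 * alpha ^ 2 + 4 * alpha * x + INR n)
        + 2 * mu * x / INR n * (e_mu mu (- (INR n * x)) / e_mu mu (INR n * x))))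
    * CB2_norm h h1 h2.
Proof.
  unfold T_op, CB2_norm.
  set (A := acoef alpha mu n x).
  set (t := fun k => sm mu k / INR n).
  change (fun k => h_poly mu k (INR n) alpha / gamma_mu mu k * x ^ k *
                   h ((INR k + 2 * mu * theta k) / INR n)) with (fun k => A k * h (t k)).
  assert (HnR : 0 < INR n) by (apply lt_0_INR; auto).
  destruct (sup_norm_spec h) as [B0 N0]. apply Hh.
  destruct (sup_norm_spec h1) as [B1 N1]. apply Hh.
  destruct (sup_norm_spec h2) as [B2 N2]. apply Hh.
  set (H0 := sup_norm h) in *. set (H1 := sup_norm h1) in *. set (H2 := sup_norm h2) in *.
  assert (Ann : forall k, 0 <= A k).
  { intros k. unfold A. rewrite a_eq by auto. apply cond_pos_sum. intros j.
    apply Rmult_le_pos. apply Ez_nn; auto. apply Q_nn; auto. }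
  assert (tnn : forall k, 0 <= t k).
  { intros k. unfold t. apply Rmult_le_pos. apply sm_nn; auto. left. apply Rinv_0_lt_compat; auto. }
  assert (HM0 := M0 alpha mu n x Halpha Hmu Hn Hx).
  assert (HM1 := M1 alpha mu n x Halpha Hmu Hn Hx).
  assert (HM2 := M2 alpha mu n x Halpha Hmu Hn Hx).
  fold A in HM0, HM1, HM2.
  set (Q0 := e_mu mu (INR n * x)) in *.
  set (Qm := e_mu mu (- (INR n * x))) in *.
  set (E0 := exp (alpha * x ^ 2)) in *.
  assert (Q0pos : 1 <= Q0) by (apply e_mu_pos; auto; apply Rmult_le_pos; auto; lra).
  assert (E0pos : 0 < E0) by apply exp_pos.
  set (D1 := 2 * alpha * x ^ 2 / INR n).
  set (D2 := / INR n ^ 2 * x * (4 * x ^ 3 * alpha ^ 2 + 4 * alpha * x + INR n) +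
             2 * mu * x / INR n * (Qm / Q0)).
  assert (HT1 : is_series (fun k => A k * (t k - x)) (E0 * Q0 * D1)).
  { eapply is_series_eq.
    - eapply is_series_ext; [|apply (lin3_series _ _ _ _ _ _ (/ INR n) (-x) 0 HM1 HM0 HM0)].
      intros k; fixeq. unfold t. field. lra.
    - fixeq. unfold D1. field. lra. }
  assert (HT2 : is_series (fun k => A k * (t k - x)^2) (E0 * Q0 * D2)).
  { eapply is_series_eq.
    - eapply is_series_ext; [|apply (lin3_series _ _ _ _ _ _ (/ INR n ^ 2) (-2 * x / INR n) (x^2) HM2 HM1 HM0)].
      intros k; fixeq. unfold t. field. lra.
    - fixeq. unfold D2. field. lra. }
  assert (D1nn : 0 <= D1).
  { unfold D1. apply Rmult_le_pos. apply Rmult_le_pos. lra. apply pow_le; auto. left; apply Rinv_0_lt_compat; auto. }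
  assert (D2nn : 0 <= D2).
  { apply series_nn in HT2. 
    - apply (Rmult_le_reg_l (E0 * Q0)). apply Rmult_lt_0_compat; lra. lra.
    - intros k. apply Rmult_le_pos; auto. apply pow2_ge_0. }
  assert (HT2s : is_series (fun k => H2 / 2 * (A k * (t k - x)^2)) (H2 / 2 * (E0 * Q0 * D2))).
  { exact (is_series_scal (H2/2) _ _ HT2). }
  set (R := fun k => h (t k) - h x - h1 x * (t k - x)).
  assert (RB : forall k, Rabs (A k * R k) <= H2 / 2 * (A k * (t k - x)^2)).
  { intros k. rewrite Rabs_mult, (Rabs_pos_eq _ (Ann k)).
    unfold R. assert (Hk := taylor h h1 h2 H2 x (t k) Hh B2 Hx (tnn k)). replace (H2 / 2 * (A k * (t k - x)^2)) with (A k * (H2 / 2 * (t k - x)^2)) by ring. apply Rmult_le_compat_l; auto. }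
  assert (exR : ex_series (fun k => Rabs (A k * R k))).
  { apply (@ex_series_le R_AbsRing R_CompleteNormedModule _ (fun k => H2 / 2 * (A k * (t k - x)^2))).
    - intros k. change (norm (Rabs (A k * R k))) with (Rabs (Rabs (A k * R k))).
      rewrite Rabs_Rabsolu. apply RB.
    - eexists. exact HT2s. }
  assert (HSR := Series_correct _ (ex_series_Rabs _ exR)).
  set (SR := Series (fun k => A k * R k)) in *.
  assert (SRb : Rabs SR <= H2 / 2 * (E0 * Q0 * D2)).
  { eapply Rle_trans. apply Series_Rabs. exact exR.
    rewrite <- (is_series_unique _ _ HT2s).
    apply Series_le.
    - intros k. split. apply Rabs_pos. apply RB.
    - eexists. exact HT2s. }
  assert (HS : is_series (fun k => A k * h (t k)) (h x * (E0 * Q0) + h1 x * (E0 * Q0 * D1) + 1 * SR)).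
  { eapply is_series_ext; [|apply (lin3_series _ _ _ _ _ _ (h x) (h1 x) 1 HM0 HT1 HSR)].
    intros k; fixeq. unfold R. ring. }
  rewrite (is_series_unique _ _ HS).
  assert (Fpos : 0 < E0 * Q0) by (apply Rmult_lt_0_compat; lra).
  replace (/ (E0 * Q0) * (h x * (E0 * Q0) + h1 x * (E0 * Q0 * D1) + 1 * SR) - h x)
    with (h1 x * D1 + SR / (E0 * Q0)) by (field; lra).
  eapply Rle_trans. apply Rabs_triang.
  rewrite Rabs_mult, (Rabs_pos_eq D1) by auto.
  assert (HB1 := B1 x Hx).
  assert (Hq : Rabs (SR / (E0 * Q0)) <= H2 / 2 * D2).
  { unfold Rdiv. rewrite Rabs_mult, Rabs_inv, (Rabs_pos_eq (E0 * Q0)) by lra.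
    apply (Rmult_le_reg_r (E0 * Q0)); auto.
    rewrite Rmult_assoc, Rinv_l by lra. nra. }
  nra.
Qed.
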